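(* Let $k\geq 2$ and let $U$ be an $n\times n$ unitary matrix with entries in $\mathcal{R}_{2^k}$. Then \[\det\nolimits_{\mathcal{R}_{2^{k-1}}}(\phi_k(U))=\det\nolimits_{\mathcal{R}_{2^{k-1}}}\big(\phi_k(\det\nolimits_{\mathcal{R}_{2^k}}(U))\big).\]
   Context: $\zeta_n=e^{2\pi i/n}$ and $\mathcal{R}_n$ is the smallest subring of $\mathbb{C}$ containing $1/2$ and $\zeta_n$. For $k\ge2$, every matrix $M$ with entries in $\mathcal{R}_{2^k}$ can be uniquely written as $M=A+B\zeta_{2^k}$ with $A,B$ matrices over $\mathcal{R}_{2^{k-1}}$; define $\phi_k(M)=A\otimes I_2+B\otimes\Lambda_k$, where $\Lambda_k=\begin{bmatrix}0&1\\ \zeta_{2^{k-1}}&0\end{bmatrix}$. In particular for a scalar $u\in\mathcal{R}_{2^k}$, $\phi_k(u)$ is a $2\times 2$ matrix over $\mathcal{R}_{2^{k-1}}$. $\det_R$ denotes the determinant computed over the ring $R$. *)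

(* Defs.v *)
From mathcomp Require Import all_boot all_algebra all_field.
From mathcomp Require Import mxtens.
Set Implicit Arguments. Unset Strict Implicit. Unset Printing Implicit Defensive.
Import GRing.Theory Num.Theory.
Local Open Scope ring_scope.

(* Complex numbers are modelled by algC (algebraic complex numbers); all
   the numbers involved are algebraic. *)

(* zeta n = e^{2 pi i/n}: n.-root (-1) is the n-th root of -1 of minimal
   nonnegative argument, i.e. e^{i pi/n}; its square is e^{2 pi i/n}. *)
Definition zeta (n : nat) : algC := (n.-root (-1)) ^+ 2.

Definition inR (n : nat) (x : algC) : Prop :=
  forall S : {pred algC}, subring_closed S ->
    2%:R^-1 \in S -> zeta n \in S -> x \in S.

Definition mxOverR (n : nat) {p q : nat} (M : 'M[algC]_(p, q)) : Prop :=
  forall i j, inR n (M i j).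

Definition unitary {n : nat} (U : 'M[algC]_n) : Prop :=
  U *m (map_mx (fun x : algC => x^*) U)^T = 1%:M.

Definition Lambda (k : nat) : 'M[algC]_2 :=
  \matrix_(i < 2, j < 2)
    if ((i : nat) == 0%N) && ((j : nat) == 1%N) then 1
    else if ((i : nat) == 1%N) && ((j : nat) == 0%N) then zeta (2 ^ (k - 1))
    else 0.

(* phi_k (A + B zeta_{2^k}) = A (x) I_2 + B (x) Lambda_k  (Kronecker product) *)
Definition phi (k : nat) {n : nat} (A B : 'M[algC]_n) : 'M[algC]_(n * 2) :=
  A *t (1%:M : 'M[algC]_2) + B *t Lambda k.

Definition phi_scalar (k : nat) (a b : algC) : 'M[algC]_2 :=
  a%:M + b *: Lambda k.

(* Main.v *)
Require Import Defs.
From mathcomp Require Import all_boot all_algebra all_field.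
From mathcomp Require Import mxtens.
From mathcomp Require Import all_order all_fingroup ring.
Import Order.TTheory.
Import GRing.Theory Num.Theory.
Local Open Scope ring_scope.

Lemma unit_norm {x : algC} {n} : (0 < n)%N -> x ^+ n = -1 -> `|x| = 1.
Proof.
move=> n0 hx; apply/eqP; rewrite -(pexpr_eq1 n0) ?normr_ge0 //.
by rewrite -normrX hx normrN normr1.
Qed.

Lemma Re2 {x : algC} : `|x| = 1 -> 'Re x ^+ 2 + 'Im x ^+ 2 = 1.
Proof. by move=> h; rewrite -normC2_Re_Im h expr1n. Qed.

Lemma root_sq M : (1 < M)%N -> ((2 * M).-root (-1 : algC)) ^+ 2 = M.-root (-1 : algC).
Proof.
move=> M1; have M0 : (0 < M)%N by apply: ltnW.
have N0 : (0 < 2 * M)%N by rewrite muln_gt0.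
have N1 : (1 < 2 * M)%N by rewrite (leq_trans M1) // leq_pmull.
set r := (2 * M).-root (-1 : algC); set s := M.-root (-1 : algC).
have rN : r ^+ (2 * M) = -1 by rewrite rootCK.
have sM : s ^+ M = -1 by rewrite rootCK.
have nr := unit_norm N0 rN; have ns := unit_norm M0 sM.
have d0 : 0 <= 'Im r by apply: Im_rootC_ge0.
have c0 : 0 <= 'Re r.
  have h : 'Re (- r^*) <= 'Re r.
    apply: rootC_Re_max => //.
      by rewrite exprNn exprM sqrrN !expr1n mul1r -rmorphXn rN rmorphN rmorph1.
    by rewrite raddfN /= Im_conj opprK.
  move: h; rewrite raddfN /= Re_conj -subr_ge0 opprK -mulr2n.
  by rewrite pmulrn_lge0.
have h1 : 'Re (r ^+ 2) <= 'Re s.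
  apply: rootC_Re_max => //; first by rewrite -exprM.
  by rewrite expr2 ImM addr_ge0 // mulr_ge0.
set t := 2.-root s.
have t2 : t ^+ 2 = s by rewrite rootCK.
have nt : `|t| = 1.
  by apply: (unit_norm N0); rewrite exprM t2.
have Ims : 0 <= 'Im s by apply: Im_rootC_ge0.
have It : 0 <= 'Im t by apply: Im_rootC_ge0.
have Rt : 0 <= 'Re t.
  have : 0 <= 'Im (t ^+ 2) by rewrite t2.
  rewrite expr2 ImM -mulr2n pmulrn_lge0 //.
  have [Ipos|] := boolP (0 < 'Im t).
    by rewrite pmulr_lge0.
  rewrite lt_def It andbT negbK => /eqP It0 _.
  have treal : t \is Num.real by apply/Creal_ImP.
  have : 0 <= s ^+ M.
    by rewrite -t2 -exprM exprM exprn_ge0 // -realEsqr.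
  by rewrite sM oppr_ge0 ler10.
have h2 : 'Re t <= 'Re r.
  by apply: rootC_Re_max => //; rewrite exprM t2.
have eRe : 'Re (r ^+ 2) = 'Re s.
  apply/le_anti; rewrite h1 /=.
  rewrite -t2 !expr2 !ReM.
  have er := Re2 nr; have et := Re2 nt.
  have -> : 'Im r * 'Im r = 1 - 'Re r * 'Re r by rewrite -er; ring.
  have -> : 'Im t * 'Im t = 1 - 'Re t * 'Re t by rewrite -et; ring.
  have hm := ler_pM Rt Rt h2 h2.
  by rewrite lerD // lerN2 lerD2l lerN2.
have eIm : 'Im (r ^+ 2) = 'Im s.
  apply/eqP; rewrite -(eqrXn2 (_ : (0 < 2)%N)) //; last first.
    by rewrite expr2 ImM addr_ge0 // mulr_ge0.
  have e1 : 'Re (r ^+ 2) ^+ 2 + 'Im (r ^+ 2) ^+ 2 = 1.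
    by apply: Re2; rewrite normrX nr expr1n.
  have e2 := Re2 ns.
  have -> : 'Im (r ^+ 2) ^+ 2 = 1 - 'Re (r ^+ 2) ^+ 2 by rewrite -e1; ring.
  have -> : 'Im s ^+ 2 = 1 - 'Re s ^+ 2 by rewrite -e2; ring.
  by rewrite eRe.
by rewrite [LHS]Crect [RHS]Crect eRe eIm.
Qed.

Lemma zeta_facts {k} : (2 <= k)%N ->
  zeta (2 ^ k) ^+ 2 = zeta (2 ^ (k - 1)) /\ zeta (2 ^ k) ^+ (2 ^ (k - 1)) = -1.
Proof.
move=> hk; have -> : k = (k - 1).+1 by rewrite subn1 prednK // (leq_trans _ hk).
rewrite subn1 /= expnS /zeta root_sq; last first.
  by rewrite -{1}(expn0 2) ltn_exp2l // -subn1 subn_gt0.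
by split; rewrite ?subn1 //= rootCK // expn_gt0.
Qed.

Lemma aut_exists {k} : (2 <= k)%N -> exists u : {rmorphism algC -> algC},
  u (zeta (2 ^ k)) = - zeta (2 ^ k) /\ forall x, inR (2 ^ (k - 1)) x -> u x = x.
Proof.
move=> hk; have [z2 zM] := zeta_facts hk.
have ek : (2 ^ k = 2 * 2 ^ (k - 1))%N.
  by rewrite -expnS subn1 prednK // (leq_trans _ hk).
have cop : coprime (1 + 2 ^ (k - 1)) (2 ^ k).
  rewrite coprimeXr // coprimen2 /= oddD /= oddX /= orbF subn_eq0 -ltnNge.
  by rewrite (leq_trans _ hk).
have [u hu] := Qn_aut_exists cop.
have uz : u (zeta (2 ^ k)) = - zeta (2 ^ k).
  have zp : zeta (2 ^ k) ^+ (1 + 2 ^ (k - 1))%N = - zeta (2 ^ k).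
    by rewrite exprD zM expr1 mulrN1.
  have z1 : zeta (2 ^ k) ^+ (2 ^ k)%N = 1 by rewrite {2}ek exprM exprAC zM sqrrN expr1n.
  by rewrite hu ?zp.
set z := zeta (2 ^ k) in z2 zM uz *.
exists u; split => // x hx.
apply/eqP; apply: (hx [pred y | u y == y]).
- split; first by rewrite inE rmorph1.
  + by move=> a b; rewrite !inE rmorphB => /eqP -> /eqP ->.
  + by move=> a b; rewrite !inE rmorphM => /eqP -> /eqP ->.
- by rewrite inE fmorphV rmorph_nat.
- by rewrite inE -z2 rmorphXn uz sqrrN.
Qed.

Lemma det_reindex m m' (e : m = m') (f : 'I_m -> 'I_m') (finj : injective f)
  (N : 'M[algC]_m') : \det (\matrix_(i, j) N (f i) (f j)) = \det N.
Proof.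
case: m' / e in f finj N *.
set s := perm finj.
have -> : \matrix_(i, j) N (f i) (f j) = row_perm s (col_perm s N).
  by apply/matrixP => i j; rewrite !mxE !permE.
rewrite row_permE col_permE !det_mulmx mulrCA -det_mulmx -perm_mxM.
by rewrite mulgV perm_mx1 det1 mulr1.
Qed.

Definition hidx {n} (t : 'I_(n * 2)) : 'I_(n + n) :=
  let p := mxtens_unindex t in
  if p.2 == ord0 then lshift n p.1 else rshift n p.1.

Lemma hidx_inj n : injective (@hidx n).
Proof.
move=> t t'.
case: (mxtens_indexP t) => i r; case: (mxtens_indexP t') => j s.
rewrite /hidx !mxtens_indexK /=.
case: r => [[|[|//]] Hr]; case: s => [[|[|//]] Hs] /=.
- by move/lshift_inj => ->; congr mxtens_index; congr pair; apply: val_inj.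
- by move/(congr1 val) => /= eij; have := ltn_ord i; rewrite eij ltnNge leq_addr.
- by move/(congr1 val) => /= eij; have := ltn_ord j; rewrite -eij ltnNge leq_addr.
- by move/rshift_inj => ->; congr mxtens_index; congr pair; apply: val_inj.
Qed.

Lemma phi_block k n (A B : 'M[algC]_n) :
  phi k A B = \matrix_(i, j)
    (block_mx A B (zeta (2 ^ (k - 1)) *: B) A) (hidx i) (hidx j).
Proof.
apply/matrixP => t t'.
case: (mxtens_indexP t) => i r; case: (mxtens_indexP t') => j s.
rewrite /phi [RHS]mxE [LHS]mxE !tensmxE /hidx !mxtens_indexK /=.
case: r => [[|[|//]] Hr]; case: s => [[|[|//]] Hs] /=.
- by rewrite block_mxEul !mxE /= mulr1 mulr0 addr0.
- by rewrite block_mxEur !mxE /= mulr0 mulr1 add0r.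
- by rewrite block_mxEdl !mxE /= mulr0 add0r mulrC.
- by rewrite block_mxEdr !mxE /= mulr1 mulr0 addr0.
Qed.

Lemma det_phi k n (A B : 'M[algC]_n) z : z ^+ 2 = zeta (2 ^ (k - 1)) ->
  \det (phi k A B) = \det (A + z *: B) * \det (A - z *: B).
Proof.
move=> hz; set w := zeta (2 ^ (k - 1)) in hz *.
have e : (n * 2 = n + n)%N by rewrite muln2 addnn.
rewrite phi_block (@det_reindex _ _ e _ (@hidx_inj n)).
set X := block_mx A B (w *: B) A.
set P := block_mx (1%:M : 'M_n) 0 ((- z)%:M) 1%:M.
set P' := block_mx (1%:M : 'M_n) 0 (z%:M) 1%:M.
have dP : \det P = 1 by rewrite det_lblock !det1 mulr1.
have dP' : \det P' = 1 by rewrite det_lblock !det1 mulr1.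
have -> : \det X = \det (P *m X *m P').
  by rewrite !det_mulmx dP dP' mul1r mulr1.
rewrite /P /X /P' !mulmx_block.
rewrite !mul1mx !mul0mx !mulmx1 !mulmx0 !mul_scalar_mx !mul_mx_scalar.
have -> : - z *: A + w *: B + z *: (- z *: B + A) = 0.
  by apply/matrixP => i j; rewrite -hz !mxE; ring.
rewrite !addr0 !add0r det_ublock; congr (_ * _).
by rewrite scaleNr addrC.
Qed.

Lemma det_phis k (a b z : algC) : z ^+ 2 = zeta (2 ^ (k - 1)) ->
  \det (phi_scalar k a b) = (a + z * b) * (a - z * b).
Proof.
move=> hz.
have -> : phi_scalar k a b = phi k (a%:M : 'M_1) b%:M.
  apply/matrixP => t t'.
  case: (@mxtens_indexP 1 2 t) => i r; case: (@mxtens_indexP 1 2 t') => j s.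
  rewrite /phi /phi_scalar [RHS]mxE !tensmxE !mxE !ord1 /=.
  by case: r => [[|[|//]] Hr]; case: s => [[|[|//]] Hs];
    rewrite /= ?mulr1n ?mulr0n ?mulr1 ?mulr0 ?addr0 ?add0r ?mul1r.
have := @det_phi k 1 (a%:M : 'M_1) b%:M z hz.
rewrite !det_mx11 !mxE /= !mulr1n => <-.
by [].
Qed.

Theorem corollary5p2 (k n : nat) (hk : (2 <= k)%N) (U : 'M[algC]_n)
  (hUR : mxOverR (2 ^ k) U) (hU : unitary U)
  (A B : 'M[algC]_n) (hA : mxOverR (2 ^ (k - 1)) A) (hB : mxOverR (2 ^ (k - 1)) B)
  (hAB : U = A + zeta (2 ^ k) *: B)
  (a b : algC) (ha : inR (2 ^ (k - 1)) a) (hb : inR (2 ^ (k - 1)) b)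
  (hab : \det U = a + b * zeta (2 ^ k)) :
  \det (phi k A B) = \det (phi_scalar k a b).
Proof.
have [z2 _] := zeta_facts hk.
have [u [uz ufix]] := aut_exists hk.
rewrite (det_phi _ _ _ _ _ z2) (det_phis _ _ _ _ z2).
have e1 : \det (A + zeta (2 ^ k) *: B) = a + zeta (2 ^ k) * b.
  by rewrite -hAB hab mulrC.
have e2 : \det (A - zeta (2 ^ k) *: B) = a - zeta (2 ^ k) * b.
  have -> : A - zeta (2 ^ k) *: B = map_mx u (A + zeta (2 ^ k) *: B).
    apply/matrixP => i j; rewrite !mxE rmorphD rmorphM uz !ufix //.
    by rewrite mulNr.
  by rewrite det_map_mx e1 rmorphD rmorphM uz !ufix // mulNr.
by rewrite e1 e2.
Qed.
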